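(* Every derivable separability judgment $\Sigma;\Gamma\vdash\tau:m$ has a derivation in which every occurrence of the conversion rule has, as its premise, an instance of the variable axiom. Equivalently, every derivable judgment is derivable in the system where the conversion rule is removed and replaced by the rule: from $(\alpha:m)\in\Gamma$ and $m\geq n$ infer $\Sigma;\Gamma\vdash\alpha:n$.
   Context: Type expressions: $\tau,\kappa ::= \alpha \mid \mathsf{float}\mid\mathsf{int}\mid\mathsf{bool}\mid t(\tau_1,\dots,\tau_n)\mid \tau\to\kappa\mid \tau_1\times\dots\times\tau_n\mid \forall\alpha.\tau\mid\exists\alpha.\tau\mid (\tau \text{ with } \kappa_1=\kappa_2)$ (the last is an equality guard), where $\alpha$ ranges over type variables and $t$ over type constructors. Separability modes are $\mathsf{Ind}<\mathsf{Sep}<\mathsf{Deepsep}$ (totally ordered). Mode composition: $\mathsf{Ind}\circ m=\mathsf{Ind}$, $\mathsf{Sep}\circ m=m$, $\mathsf{Deepsep}\circ m=\mathsf{Deepsep}$. A context $\Gamma$ is a finite list $\alpha_1:m_1,\dots,\alpha_k:m_k$; $\Gamma\le\Gamma'$ iff they have the same variables and pointwise $m\le m'$. A mode signature $\Sigma$ is a list of entries $t(\alpha_1:m_1,\dots,\alpha_n:m_n)$. The judgment $\Sigma;\Gamma\vdash\tau:m$ is defined by the rules: (variable axiom) if $(\alpha:m)\in\Gamma$ then $\Sigma;\Gamma\vdash\alpha:m$; (constructor) if $t(\alpha_1:m_1,\dots,\alpha_n:m_n)\in\Sigma$ and $\Sigma;\Gamma\vdash\tau_i:m\circ m_i$ for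 all $i$, then $\Sigma;\Gamma\vdash t(\tau_1,\dots,\tau_n):m$; (arrow) if $\Sigma;\Gamma\vdash\tau:m\circ\mathsf{Ind}$ and $\Sigma;\Gamma\vdash\kappa:m\circ\mathsf{Ind}$ then $\Sigma;\Gamma\vdash\tau\to\kappa:m$; (product) if $\Sigma;\Gamma\vdash\tau_i:m\circ\mathsf{Ind}$ for all $i$ then $\Sigma;\Gamma\vdash\tau_1\times\dots\times\tau_n:m$; (forall) if $\Sigma;\Gamma,\alpha:n\vdash\tau:m$ for some mode $n$ then $\Sigma;\Gamma\vdash\forall\alpha.\tau:m$; (exists) if $\Sigma;\Gamma,\alpha:\mathsf{Ind}\vdash\tau:m$ then $\Sigma;\Gamma\vdash\exists\alpha.\tau:m$; (conversion) if $\Sigma;\Gamma\vdash\tau:m$ and $m\ge n$ then $\Sigma;\Gamma\vdash\tau:n$; (guard) if for every $\Gamma'\ge\Gamma$ with $\Sigma;\Gamma'\vdash \kappa_1=\kappa_2$ we have $\Sigma;\Gamma'\vdash\tau:m$, then $\Sigma;\Gamma\vdash(\tau\text{ with }\kappa_1=\kappa_2):m$. Here $\Sigma;\Gamma\vdash\tau_1=\tau_2$ holds iff for every mode $m$, $\Sigma;\Gamma\vdash\tau_1:m \iff \Sigma;\Gamma\vdash\tau_2:m$. *)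

(* Defs.v *)
From Stdlib Require Import List.
Import ListNotations.

Inductive mode : Type := Ind | Sep | Deepsep.

Definition mode_rank (m : mode) : nat :=
  match m with Ind => 0 | Sep => 1 | Deepsep => 2 end.

Definition mode_le (m n : mode) : Prop := mode_rank m <= mode_rank n.

Definition mode_comp (m n : mode) : mode :=
  match m with Ind => Ind | Sep => n | Deepsep => Deepsep end.

Definition tcon := nat.

(* Type expressions; type variables are de Bruijn indices, index 0 being the
   most recently bound / rightmost variable of the context. *)
Inductive typ : Type :=
| TVar (i : nat)
| TFloat | TInt | TBool
| TCon (t : tcon) (args : list typ)
| TArrow (a b : typ)
| TProd (comps : list typ)
| TForall (body : typ)
| TExists (body : typ)
| TWith (tau k1 k2 : typ).   (* (tau with k1 = k2) *)

(* A context alpha_1:m_1,...,alpha_k:m_k is the list [m_k; ...; m_1]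
   (head = most recent variable, de Bruijn index 0). *)
Definition ctx := list mode.

Definition ctx_le (G G' : ctx) : Prop := Forall2 mode_le G G'.

(* Mode signature: entries t(alpha_1:m_1,...,alpha_n:m_n). *)
Definition signature := list (tcon * list mode).

(* Closure of a set of modes under the conversion rule
   (from tau : m and m >= n infer tau : n); the context and type are fixed. *)
Inductive conv_closure (S : mode -> Prop) : mode -> Prop :=
| cc_rule m : S m -> conv_closure S m
| cc_conv m n : conv_closure S m -> mode_le n m -> conv_closure S n.

(* Defined by structural recursion on tau (the guard rule refers negatively
   to derivability of the equality judgment on the subterms k1, k2, so the
   system is stratified by the structure of types). At each type, the set of
   derivable modes is the closure under conversion of the modes given by the
   rule for the head constructor. *)
Fixpoint der1 (Sg : signature) (G : ctx) (tau : typ) (n : mode) {struct tau} : Prop :=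
  conv_closure
    (fun m =>
       match tau with
       | TVar i => nth_error G i = Some m
       | TFloat | TInt | TBool => False
       | TCon t args =>
           exists ms, In (t, ms) Sg /\
             (fix ders (l : list typ) (ms : list mode) : Prop :=
                match l, ms with
                | [], [] => True
                | a :: l', mi :: ms' => der1 Sg G a (mode_comp m mi) /\ ders l' ms'
                | _, _ => False
                end) args ms
       | TArrow a b => der1 Sg G a (mode_comp m Ind) /\ der1 Sg G b (mode_comp m Ind)
       | TProd comps =>
           (fix all (l : list typ) : Prop :=
              match l with
              | [] => True
              | a :: l' => der1 Sg G a (mode_comp m Ind) /\ all l'
              end) comps
       | TForall body => exists k, der1 Sg (k :: G) body m
       | TExists body => der1 Sg (Ind :: G) body m
       | TWith t0 k1 k2 =>
           forall G', ctx_le G G' ->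
             (forall p, der1 Sg G' k1 p <-> der1 Sg G' k2 p) ->
             der1 Sg G' t0 m
       end) n.

Definition eq1 (Sg : signature) (G : ctx) (t1 t2 : typ) : Prop :=
  forall m, der1 Sg G t1 m <-> der1 Sg G t2 m.

Fixpoint der2 (Sg : signature) (G : ctx) (tau : typ) (m : mode) {struct tau} : Prop :=
  match tau with
  | TVar i => exists m', nth_error G i = Some m' /\ mode_le m m'
  | TFloat | TInt | TBool => False
  | TCon t args =>
      exists ms, In (t, ms) Sg /\
        (fix ders (l : list typ) (ms : list mode) : Prop :=
           match l, ms with
           | [], [] => True
           | a :: l', mi :: ms' => der2 Sg G a (mode_comp m mi) /\ ders l' ms'
           | _, _ => False
           end) args ms
  | TArrow a b => der2 Sg G a (mode_comp m Ind) /\ der2 Sg G b (mode_comp m Ind)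
  | TProd comps =>
      (fix all (l : list typ) : Prop :=
         match l with
         | [] => True
         | a :: l' => der2 Sg G a (mode_comp m Ind) /\ all l'
         end) comps
  | TForall body => exists k, der2 Sg (k :: G) body m
  | TExists body => der2 Sg (Ind :: G) body m
  | TWith t0 k1 k2 =>
      forall G', ctx_le G G' ->
        (forall p, der2 Sg G' k1 p <-> der2 Sg G' k2 p) ->
        der2 Sg G' t0 m
  end.

(* Main.v *)
Require Import Defs.
From Stdlib Require Import List Lia.
Import ListNotations.

Definition ders1 Sg G m := fix ders (l : list typ) (ms : list mode) : Prop :=
  match l, ms with
  | [], [] => True
  | a :: l', mi :: ms' => der1 Sg G a (mode_comp m mi) /\ ders l' ms'
  | _, _ => False
  end.
Definition ders2 Sg G m := fix ders (l : list typ) (ms : list mode) : Prop :=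
  match l, ms with
  | [], [] => True
  | a :: l', mi :: ms' => der2 Sg G a (mode_comp m mi) /\ ders l' ms'
  | _, _ => False
  end.
Definition all1 Sg G m := fix all (l : list typ) : Prop :=
  match l with
  | [] => True
  | a :: l' => der1 Sg G a (mode_comp m Ind) /\ all l'
  end.
Definition all2 Sg G m := fix all (l : list typ) : Prop :=
  match l with
  | [] => True
  | a :: l' => der2 Sg G a (mode_comp m Ind) /\ all l'
  end.

Lemma typ_ind2 (P : typ -> Prop)
 (Hv: forall i, P (TVar i)) (Hf: P TFloat) (Hi: P TInt) (Hb: P TBool)
 (Hc: forall t args, Forall P args -> P (TCon t args))
 (Ha: forall a b, P a -> P b -> P (TArrow a b))
 (Hp: forall l, Forall P l -> P (TProd l))
 (Hfa: forall b, P b -> P (TForall b)) (He: forall b, P b -> P (TExists b))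
 (Hw: forall t k1 k2, P t -> P k1 -> P k2 -> P (TWith t k1 k2)) : forall t, P t.
Proof.
  refine (fix F t := match t with
   | TVar i => Hv i | TFloat => Hf | TInt => Hi | TBool => Hb
   | TCon c args => Hc c args ((fix G l := match l return Forall P l with
        [] => Forall_nil _ | a :: l' => Forall_cons _ (F a) (G l') end) args)
   | TArrow a b => Ha a b (F a) (F b)
   | TProd l => Hp l ((fix G l := match l return Forall P l with
        [] => Forall_nil _ | a :: l' => Forall_cons _ (F a) (G l') end) l)
   | TForall b => Hfa b (F b) | TExists b => He b (F b)
   | TWith t k1 k2 => Hw t k1 k2 (F t) (F k1) (F k2) end).
Qed.

Lemma comp_mono m n k : mode_le n m -> mode_le (mode_comp n k) (mode_comp m k).
Proof. unfold mode_le; destruct m, n, k; simpl; lia. Qed.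

Lemma mono Sg tau : forall G m n, mode_le n m -> der2 Sg G tau m -> der2 Sg G tau n.
Proof.
  induction tau using typ_ind2; intros G m n Hle HH; simpl in *; auto.
  - destruct HH as [m' [H1 H2]]. exists m'. split; auto. unfold mode_le in *; lia.
  - destruct HH as [ms [Hin Hd]]. exists ms. split; auto.
    change (ders2 Sg G n args ms). change (ders2 Sg G m args ms) in Hd.
    clear Hin; revert ms Hd. induction H as [|a l Ha Hl IHl]; intros [|mi ms]; simpl; auto.
    intros [H1 H2]; split; auto. eapply Ha; [apply comp_mono; exact Hle| exact H1].
  - destruct HH; split; [eapply IHtau1|eapply IHtau2]; eauto; apply comp_mono; auto.
  - change (all2 Sg G n l). change (all2 Sg G m l) in HH.
    induction H as [|a l Ha Hl IHl]; simpl in *; auto.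
    destruct HH; split; auto. eapply Ha; [apply comp_mono; exact Hle| exact H].
  - destruct HH as [k Hk]; exists k; eauto.
  - eauto.
  - intros G' HG Heq. eapply IHtau1; eauto.
Qed.

Lemma cc_elim (S T : mode -> Prop) : (forall m, S m -> T m) ->
  (forall m n, T m -> mode_le n m -> T n) -> forall n, conv_closure S n -> T n.
Proof. intros H1 H2 n H; induction H; eauto. Qed.

Lemma equiv Sg tau : forall G m, der1 Sg G tau m <-> der2 Sg G tau m.
Proof.
  induction tau using typ_ind2; intros G n; split; intro HH;
  try (eapply cc_elim; [ | intros ? ? ? ?; eapply mono; eauto | exact HH ]; clear HH n; intros n HH);
  simpl in *.
  - eexists; split; eauto. unfold mode_le; lia.
  - destruct HH as [m' [H1 H2]]. eapply cc_conv; [apply cc_rule; exact H1| exact H2].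
  - contradiction.
  - contradiction.
  - contradiction.
  - contradiction.
  - contradiction.
  - contradiction.
  - destruct HH as [ms [Hin Hd]]. exists ms. split; auto.
    change (ders2 Sg G n args ms). change (ders1 Sg G n args ms) in Hd.
    clear Hin; revert ms Hd. induction H as [|a l Ha Hl IHl]; intros [|mi ms]; simpl; auto.
    intros [H1 H2]; split; auto. apply Ha; auto.
  - apply cc_rule. destruct HH as [ms [Hin Hd]]. exists ms. split; auto.
    change (ders1 Sg G n args ms). change (ders2 Sg G n args ms) in Hd.
    clear Hin; revert ms Hd. induction H as [|a l Ha Hl IHl]; intros [|mi ms]; simpl; auto.
    intros [H1 H2]; split; auto. apply Ha; auto.
  - destruct HH; split; [apply IHtau1|apply IHtau2]; auto.
  - apply cc_rule. destruct HH; split; [apply IHtau1|apply IHtau2]; auto.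
  - change (all2 Sg G n l). change (all1 Sg G n l) in HH.
    induction H as [|a l Ha Hl IHl]; simpl in *; auto.
    destruct HH; split; auto. apply Ha; auto.
  - apply cc_rule. change (all1 Sg G n l). change (all2 Sg G n l) in HH.
    induction H as [|a l Ha Hl IHl]; simpl in *; auto.
    destruct HH; split; auto. apply Ha; auto.
  - destruct HH as [k Hk]; exists k; apply IHtau; auto.
  - apply cc_rule. destruct HH as [k Hk]; exists k; apply IHtau; auto.
  - apply IHtau; auto.
  - apply cc_rule. apply IHtau; auto.
  - intros G' HG Heq. apply IHtau1. apply HH; auto.
    intro p. rewrite IHtau2, IHtau3. apply Heq.
  - apply cc_rule. intros G' HG Heq. apply IHtau1. apply HH; auto.
    intro p. rewrite <- IHtau2, <- IHtau3. apply Heq.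
Qed.

Theorem mainTheorem1 (Sg : signature) (G : ctx) (tau : typ) (m : mode) :
  der1 Sg G tau m -> der2 Sg G tau m.
Proof. apply equiv. Qed.
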